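(* In the setting of the context, let $u_l\in k[\Gamma]$, $1\le l\le p$, be elements which are central in $A$ and such that $u_l=0$ whenever $\psi_l^{N_l}\ne\varepsilon$. Let $M$ be a free right $k[\Gamma]$-module with basis $(m(t))_{t\in\mathbb T}$, and let $\varphi:A\to M$ be the right $k[\Gamma]$-linear map with $\varphi(y^ty^{aN})=m(t)u^a$ for all $t\in\mathbb T$, $a\in\mathbb N^p$, where $u^a=u_1^{a_1}\cdots u_p^{a_p}$. Then the kernel of $\varphi$ is a right ideal of $A$.
   Context: $k$ algebraically closed of characteristic $0$. $\Gamma$ is an abelian group, $\widehat\Gamma$ its characters, $\varepsilon$ the trivial character. $A$ is an algebra containing the group algebra $k[\Gamma]$ as a subalgebra, $p\ge1$, and $y_1,\dots,y_p\in A$, $h_1,\dots,h_p\in\Gamma$, $\psi_1,\dots,\psi_p\in\widehat\Gamma$, $N_1,\dots,N_p\ge1$ satisfy: (c1) $gy_l=\psi_l(g)y_lg$ for all $l$ and $g\in\Gamma$; (c2) $y_ky_l^{N_l}=\psi_l^{N_l}(h_k)y_l^{N_l}y_k$ for all $k,l$; (c3) the elements $y_1^{a_1}\cdots y_p^{a_p}g$, $a_i\ge0$, $g\in\Gamma$, form a basis of $A$. Put $\mathbb T=\{t\in\mathbb N^p:0\le t_l<N_l\ \forall l\}$ and, for $a\in\mathbb N^p$, $y^a=y_1^{a_1}\cdots y_p^{a_p}$ and $aN=(a_1N_1,\dots,a_pN_p)$; thus $y^{aN}=y_1^{a_1N_1}\cdots y_p^{a_pN_p}$. Every element of $A$ is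 uniquely $\sum_{t\in\mathbb T,a\in\mathbb N^p}y^ty^{aN}v_{t,a}$ with $v_{t,a}\in k[\Gamma]$, so $\varphi$ is well defined. *)

(* Defs.v *)
From HB Require Import structures.
From mathcomp Require Import all_boot all_order all_algebra.
Set Implicit Arguments. Unset Strict Implicit. Unset Printing Implicit Defensive.
Import GRing.Theory.
Local Open Scope ring_scope.

Notation expvec p := {ffun 'I_p -> nat}.

(* y^a = y_1^{a_1} ... y_p^{a_p} (ordered product, indices 0..p-1). *)
Definition ymon (R : pzRingType) (p : nat) (y : 'I_p -> R) (a : expvec p) : R :=
  \prod_(l < p) y l ^+ a l.

Definition scalevec (p : nat) (a : expvec p) (N : 'I_p -> nat) : expvec p :=
  [ffun l => (a l * N l)%N].

Definition inT (p : nat) (N : 'I_p -> nat) (t : expvec p) : Prop :=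
  forall l, (t l < N l)%N.

Definition is_character (k : fieldType) (G : zmodType) (psi : G -> k) : Prop :=
  psi 0 = 1 /\ forall g h, psi (g + h) = psi g * psi h.

(* A group homomorphism Γ -> A^× (giving the algebra map k[Γ] -> A). *)
Definition is_grp_embedding (k : fieldType) (A : algType k) (G : zmodType)
  (gam : G -> A) : Prop :=
  gam 0 = 1 /\ forall g h, gam (g + h) = gam g * gam h.

Definition in_kG (k : fieldType) (A : algType k) (G : zmodType) (gam : G -> A)
  (x : A) : Prop :=
  exists s : seq (k * G), x = \sum_(q <- s) q.1 *: gam q.2.

Definition is_basis (k : fieldType) (V : lmodType k) (I : eqType) (b : I -> V)
  : Prop :=
  (forall x : V, exists s : seq (k * I), x = \sum_(q <- s) q.1 *: b q.2) /\
  (forall (s : seq I) (c : I -> k), uniq s ->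
     \sum_(i <- s) c i *: b i = 0 -> forall i, i \in s -> c i = 0).

Definition right_ideal (R : pzRingType) (S : R -> Prop) : Prop :=
  S 0 /\ (forall x x', S x -> S x' -> S (x - x')) /\
  (forall x z, S x -> S (x * z)).

(* Main.v *)
Require Import Defs.
From HB Require Import structures.
From mathcomp Require Import all_boot all_order all_algebra.
Import GRing.Theory.
Local Open Scope ring_scope.

Definition CM {k : fieldType} {A : algType k} (P : k -> Prop) (x y : A) :=
  exists c, P c /\ x * y = c *: (y * x).

Definition mulcl {k : fieldType} (P : k -> Prop) := P 1 /\ forall a b, P a -> P b -> P (a * b).

Lemma CM_mulr (k : fieldType) (A : algType k) (P : k -> Prop) (x y1 y2 : A) :
  mulcl P -> CM P x y1 -> CM P x y2 -> CM P x (y1 * y2).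
Proof.
move=> [_ PM] [c1 [P1 e1]] [c2 [P2 e2]]; exists (c1 * c2); split; first exact: PM.
rewrite mulrA e1 -scalerAl -[y1 * x * y2]mulrA e2 -scalerAr scalerA mulrA //.
Qed.

Lemma CM_mull (k : fieldType) (A : algType k) (P : k -> Prop) (x1 x2 y : A) :
  mulcl P -> CM P x1 y -> CM P x2 y -> CM P (x1 * x2) y.
Proof.
move=> [_ PM] [c1 [P1 e1]] [c2 [P2 e2]]; exists (c1 * c2); split; first exact: PM.
rewrite -mulrA e2 -scalerAr [x1 * (y * x2)]mulrA e1 -scalerAl scalerA mulrA mulrC //.
Qed.

Lemma CM_1r (k : fieldType) (A : algType k) (P : k -> Prop) (x : A) : mulcl P -> CM P x 1.
Proof. by move=> [P1 _]; exists 1; rewrite scale1r mulr1 mul1r. Qed.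

Lemma CM_1l (k : fieldType) (A : algType k) (P : k -> Prop) (x : A) : mulcl P -> CM P 1 x.
Proof. by move=> [P1 _]; exists 1; rewrite scale1r mulr1 mul1r. Qed.

Lemma CM_prodr (k : fieldType) (A : algType k) (P : k -> Prop) (x : A) (I : Type) (r : seq I) (Q : pred I) F :
  mulcl P -> (forall i, CM P x (F i)) -> CM P x (\prod_(i <- r | Q i) F i).
Proof. move=> hP hF; apply: (big_ind (CM P x)) => //; [exact: CM_1r | move=> *; exact: CM_mulr]. Qed.

Lemma CM_prodl (k : fieldType) (A : algType k) (P : k -> Prop) (x : A) (I : Type) (r : seq I) (Q : pred I) F :
  mulcl P -> (forall i, CM P (F i) x) -> CM P (\prod_(i <- r | Q i) F i) x.
Proof. move=> hP hF; apply: (big_ind (CM P ^~ x)) => //; [exact: CM_1l | move=> *; exact: CM_mull]. Qed.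

Lemma CM_exprr (k : fieldType) (A : algType k) (P : k -> Prop) (x y : A) n :
  mulcl P -> CM P x y -> CM P x (y ^+ n).
Proof. by move=> hP h; rewrite -(subn0 n) -prodr_const_nat; apply: CM_prodr. Qed.

Lemma CM_exprl (k : fieldType) (A : algType k) (P : k -> Prop) (x y : A) n :
  mulcl P -> CM P x y -> CM P (x ^+ n) y.
Proof. by move=> hP h; rewrite -(subn0 n) -prodr_const_nat; apply: CM_prodl. Qed.

Lemma comm_exprr (k : fieldType) (A : algType k) (x y : A) c n :
  x * y = c *: (y * x) -> x * y ^+ n = c ^+ n *: (y ^+ n * x).
Proof.
move=> e; elim: n => [|n IH]; first by rewrite !expr0 mulr1 mul1r scale1r.
rewrite exprS mulrA e -scalerAl -[y * x * _]mulrA IH -scalerAr scalerA [y * (_ * _)]mulrA -exprS. by rewrite exprSr mulrC.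
Qed.

Lemma comm_sym (k : fieldType) (A : algType k) (x y : A) c :
  c != 0 -> x * y = c *: (y * x) -> y * x = c^-1 *: (x * y).
Proof. by move=> c0 e; rewrite e scalerA mulVf // scale1r. Qed.

Lemma prod_sep (k : fieldType) (A : algType k) (P : k -> Prop) (I : Type) (r : seq I) (T X : I -> A) :
  mulcl P -> (forall l i, CM P (X l) (T i)) ->
  exists C, P C /\ \prod_(i <- r) (T i * X i) = C *: ((\prod_(i <- r) T i) * \prod_(i <- r) X i).
Proof.
move=> hP hC; elim: r => [|i r [C [PC e]]].
  by exists 1; rewrite !big_nil scale1r mulr1; split => //; case: hP.
have [c [Pc ec]] : CM P (X i) (\prod_(j <- r) T j) by apply: CM_prodr.
exists (C * c); split; first by case: hP => _; apply.
rewrite !big_cons e -scalerAr -!mulrA.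
rewrite [X i * (_ * _)]mulrA ec -scalerAl -scalerAr scalerA.
by rewrite -!mulrA.
Qed.

Lemma only1_prod (k : fieldType) (A : algType k) (p : nat) (l : 'I_p) (G : 'I_p -> A) :
  (forall j, j != l -> G j = 1) -> \prod_(j < p) G j = G l.
Proof. by move=> h; rewrite (big_only1 l) // => j /h. Qed.

Lemma group_sum (R : pzRingType) (J : eqType) (r : seq (J * R)) (Y : J -> R) :
  \sum_(q <- r) Y q.1 * q.2 =
  \sum_(s <- undup (map fst r)) Y s * \sum_(q <- r | q.1 == s) q.2.
Proof.
transitivity (\sum_(s <- undup (map fst r)) \sum_(q <- r)
               (if q.1 == s then Y q.1 * q.2 else 0)); last first.
  apply: eq_bigr => s _; rewrite mulr_sumr [RHS]big_mkcond; apply: eq_bigr => q _ /=.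
  by case: eqP => // ->.
rewrite exchange_big big_seq [RHS]big_seq; apply: eq_bigr => q qr.
rewrite -big_mkcond /=.
rewrite (eq_bigl (pred1 q.1)); last by move=> s; rewrite /= eq_sym.
rewrite -big_filter filter_pred1_uniq ?undup_uniq ?big_seq1 //.
rewrite mem_undup; apply: (map_f fst qr).
Qed.

Lemma CM_weak (k : fieldType) (A : algType k) (P Q : k -> Prop) (x y : A) :
  (forall c, P c -> Q c) -> CM P x y -> CM Q x y.
Proof. by move=> hPQ [c [Pc e]]; exists c; split => //; apply: hPQ. Qed.
Theorem lemma4p1
  (k : closedFieldType) (char0 : [pchar k] =i pred0)
  (G : zmodType) (A : algType k) (gam : G -> A)
  (hgam : is_grp_embedding gam)
  (p : nat) (hp : (0 < p)%N)
  (y : 'I_p -> A) (h : 'I_p -> G) (psi : 'I_p -> G -> k) (N : 'I_p -> nat)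
  (hpsi : forall l, is_character (psi l))
  (hN : forall l, (0 < N l)%N)
  (c1 : forall l g, gam g * y l = psi l g *: (y l * gam g))
  (c2 : forall i l, y i * y l ^+ N l = (psi l (h i)) ^+ N l *: (y l ^+ N l * y i))
  (c3 : is_basis (fun ag : expvec p * G => ymon y ag.1 * gam ag.2))
  (u : 'I_p -> A)
  (hu_kG : forall l, in_kG gam (u l))
  (hu_central : forall l x, u l * x = x * u l)
  (hu_zero : forall l, (exists g, psi l g ^+ N l != 1) -> u l = 0)
  (phi : A -> expvec p -> A)
  (phi_add : forall x x' t, phi (x + x') t = phi x t + phi x' t)
  (phi_rlin : forall x v t, in_kG gam v -> phi (x * v) t = phi x t * v)
  (phi_basis : forall t a s, inT N t ->
     phi (ymon y t * ymon y (scalevec a N)) s =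
       (if s == t then ymon u a else 0)) :
  right_ideal (fun x : A => forall t, phi x t = 0).
Proof.
have phi0 t : phi 0 t = 0.
  have e := phi_add 0 0 t; rewrite addr0 in e.
  by apply: (addrI (phi 0 t)); rewrite -e addr0.
have phiN x t : phi (- x) t = - phi x t.
  by apply/eqP; rewrite -addr_eq0 -phi_add addrC subrr phi0.
have phiB x x' t : phi (x - x') t = phi x t - phi x' t by rewrite phi_add phiN.
have kGZ c g : in_kG gam (c *: gam g) by exists [:: (c, g)]; rewrite big_seq1.
have gam0 : gam 0 = 1 by case: hgam.
have phiZ c x t : phi (c *: x) t = c *: phi x t.
  by rewrite -[c *: x]mulr_algr -[c *: phi x t]mulr_algr phi_rlin //; have := kGZ c 0; rewrite gam0.
have phi_sum (I : Type) (r : seq I) (Q : pred I) (F : I -> A) t :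
    phi (\sum_(i <- r | Q i) F i) t = \sum_(i <- r | Q i) phi (F i) t.
  by apply: (big_morph (phi^~ t)) => // *; apply: phi_add.
have psi_nz l g : psi l g != 0.
  apply/eqP => e; have [h0 hM] := hpsi l.
  by move: (hM g (- g)); rewrite subrr h0 e mul0r; apply/eqP; rewrite oner_eq0.
pose Pl l := fun c : k => c != 0 /\ (u l != 0 -> c = 1).
have mPl l : mulcl (Pl l).
  split; first by split; [exact: oner_neq0 | by []].
  by move=> a b [a0 a1] [b0 b1]; split; [exact: mulf_neq0 | move=> ul; rewrite a1 // b1 // mulr1].
have CMyN l i : CM (Pl l) (y l ^+ N l) (y i).
  have d0 : psi l (h i) ^+ N l != 0 by rewrite expf_neq0.
  exists (psi l (h i) ^+ N l)^-1; split; last exact: (@comm_sym _ _ _ _ _ d0 (c2 i l)).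
  split; first by rewrite invr_neq0.
  move=> ul; case: (eqVneq (psi l (h i) ^+ N l) 1) => [->|dn]; first exact: invr1.
  by move: ul; rewrite (hu_zero l) ?eqxx //; exists (h i).
have CMyNg l g : CM (Pl l) (y l ^+ N l) (gam g).
  have d0 : psi l g ^+ N l != 0 by rewrite expf_neq0.
  exists (psi l g ^+ N l)^-1; split; last exact: (@comm_sym _ _ _ _ _ d0 (@comm_exprr _ _ _ _ _ (N l) (c1 l g))).
  split; first by rewrite invr_neq0.
  move=> ul; case: (eqVneq (psi l g ^+ N l) 1) => [->|dn]; first exact: invr1.
  by move: ul; rewrite (hu_zero l) ?eqxx //; exists g.
pose zz l := y l ^+ N l - u l.
have CMz l x : CM (Pl l) (y l ^+ N l) x -> CM (Pl l) (zz l) x.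
  move=> [c [[cn c1'] e]]; exists c; split => //.
  rewrite /zz mulrBl mulrBr e hu_central.
  case: (eqVneq (u l) 0) => [->|un]; first by rewrite !mulr0 !subr0.
  by rewrite c1' // !scale1r.
have CMbas (P : k -> Prop) x : mulcl P -> (forall i, CM P x (y i)) ->
    (forall g, CM P x (gam g)) -> forall b g, CM P x (ymon y b * gam g).
  move=> mP hy hg b g; apply: CM_mulr => //; rewrite /ymon.
  by apply: CM_prodr => // i; apply: CM_exprr.
pose J (x : A) := exists w : 'I_p -> A, x = \sum_(l < p) zz l * w l.
have J0 : J 0 by exists (fun _ => 0); rewrite big1 // => l _; rewrite mulr0.
have JD x x' : J x -> J x' -> J (x + x').
  move=> [w ->] [w' ->]; exists (fun l => w l + w' l).
  by rewrite -big_split /=; apply: eq_bigr => l _; rewrite mulrDr.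
have JZ c x : J x -> J (c *: x).
  move=> [w ->]; exists (fun l => c *: w l).
  by rewrite scaler_sumr; apply: eq_bigr => l _; rewrite scalerAr.
have JB x x' : J x -> J x' -> J (x - x').
  by move=> jx jx'; apply: JD => //; rewrite -scaleN1r; apply: JZ.
have JMr x z : J x -> J (x * z).
  move=> [w ->]; exists (fun l => w l * z).
  by rewrite mulr_suml; apply: eq_bigr => l _; rewrite mulrA.
have Jz l : J (zz l).
  exists (fun j => if j == l then 1 else 0).
  rewrite (bigD1 l) //= eqxx mulr1 big1 ?addr0 // => j /negbTE ->; by rewrite mulr0.
have Jsum (I : Type) (r : seq I) (Q : pred I) (F : I -> A) :
    (forall i, J (F i)) -> J (\sum_(i <- r | Q i) F i).
  by move=> hF; apply: (big_ind J) => // *; apply: JD.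
have span x : exists s : seq (k * (expvec p * G)),
    x = \sum_(q <- s) q.1 *: (ymon y q.2.1 * gam q.2.2).
  by have [sp _] := c3; apply: sp.
have JMl x j : J j -> J (x * j).
  move=> Jj.
  have Jb b g : J (ymon y b * gam g * j).
    move: Jj => [w ->]; rewrite mulr_sumr; apply: Jsum => l.
    have [c [[cn _] e]] : CM (Pl l) (zz l) (ymon y b * gam g).
      apply: CMbas => // [i|g']; apply: CMz; [exact: CMyN | exact: CMyNg].
    rewrite mulrA (@comm_sym _ _ _ _ _ cn e) -scalerAl; apply: JZ.
    by rewrite -mulrA; apply: JMr.
  have [s ->] := span x; rewrite mulr_suml; apply: Jsum => q.
  by rewrite -scalerAl; apply: JZ.
have Rmul x1 x2 u1 u2 : J (x1 - u1) -> J (x2 - u2) -> J (x1 * x2 - u1 * u2).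
  move=> j1 j2.
  have -> : x1 * x2 - u1 * u2 = (x1 - u1) * x2 + u1 * (x2 - u2).
    by rewrite mulrBl mulrBr addrA subrK.
  by apply: JD; [apply: JMr | apply: JMl].
have Rexp x v n : J (x - v) -> J (x ^+ n - v ^+ n).
  move=> jv; elim: n => [|n IH]; first by rewrite !expr0 subrr.
  by rewrite !exprS; apply: Rmul.
have Jymon a : J (ymon y (scalevec a N) - ymon u a).
  rewrite /ymon; apply: (big_ind2 (fun X U => J (X - U))) => //.
    by rewrite subrr.
  by move=> *; apply: Rmul.
  by move=> l _; rewrite ffunE mulnC exprM; apply: Rexp; apply: Jz.
have CMpow l i m n : CM (Pl l) (y l ^+ (m * N l)) (y i ^+ n).
  by rewrite mulnC exprM; apply: CM_exprl => //; apply: CM_exprr => //; apply: CMyN.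
have Div (b : expvec p) : exists C, ymon y b =
    C *: (ymon y [ffun j => (b j %% N j)%N] * ymon y (scalevec [ffun j => (b j %/ N j)%N] N)).
  have -> : ymon y b = \prod_(j < p) (y j ^+ [ffun j => (b j %% N j)%N] j *
       y j ^+ scalevec [ffun j => (b j %/ N j)%N] N j).
    by apply: eq_bigr => j _; rewrite !ffunE -exprD addnC -divn_eq.
  have [|l i|C [_ e]] := @prod_sep _ _ (fun _ => True) _ (index_enum 'I_p)
     (fun j => y j ^+ [ffun j => (b j %% N j)%N] j)
     (fun j => y j ^+ scalevec [ffun j => (b j %/ N j)%N] N j).
  - by [].
  - rewrite /scalevec !ffunE; apply: (@CM_weak _ _ (Pl l)) => //; exact: CMpow.
  by exists C.
have Shift l (a : expvec p) : exists C', Pl l C' /\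
    ymon y (scalevec [ffun j => (a j + (j == l))%N] N) =
    C' *: (ymon y (scalevec a N) * y l ^+ N l).
  have -> : ymon y (scalevec [ffun j => (a j + (j == l))%N] N) =
     \prod_(j < p) (y j ^+ scalevec a N j * y j ^+ ((j == l) * N j)%N).
    by apply: eq_bigr => j _; rewrite !ffunE mulnDl exprD.
  have [|j i|C [PC e]] := @prod_sep _ _ (Pl l) _ (index_enum 'I_p)
     (fun j => y j ^+ scalevec a N j) (fun j => y j ^+ ((j == l) * N j)%N).
  - exact: mPl.
  - case: (eqVneq j l) => [->|njl]; first by rewrite /= mul1n; apply: CM_exprr.
    by rewrite /= mul0n expr0; apply: CM_1l.
  exists C; split => //; rewrite e; congr (_ *: (_ * _)).
  rewrite (@only1_prod _ _ _ l); first by rewrite eqxx mul1n.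
  by move=> j /negbTE ->; rewrite mul0n expr0.
pose P1 := fun c : k => c = 1.
have mP1 : mulcl P1 by split => // a b; rewrite /P1 => -> ->; rewrite mulr1.
have Ushift l (a : expvec p) :
    ymon u [ffun j => (a j + (j == l))%N] = ymon u a * u l.
  have -> : ymon u [ffun j => (a j + (j == l))%N] =
     \prod_(j < p) (u j ^+ a j * u j ^+ (j == l)).
    by apply: eq_bigr => j _; rewrite !ffunE exprD.
  have [|j i|C [PC e]] := @prod_sep _ _ P1 _ (index_enum 'I_p)
     (fun j => u j ^+ a j) (fun j => u j ^+ (j == l)).
  - exact: mP1.
  - apply: CM_exprl => //; exists 1; split => //; by rewrite scale1r hu_central.
  rewrite e PC scale1r; congr (_ * _).
  rewrite (@only1_prod _ _ _ l); first by rewrite eqxx expr1.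
  by move=> j /negbTE ->; rewrite expr0.
have kGg g : in_kG gam (gam g) by have := kGZ 1 g; rewrite scale1r.
have inTt (b : expvec p) : inT N [ffun j => (b j %% N j)%N].
  by move=> j; rewrite ffunE ltn_mod hN.
have Kz l b s : phi (zz l * ymon y b) s = 0.
  set t := [ffun j => (b j %% N j)%N]; set a := [ffun j => (b j %/ N j)%N].
  have [C eC] := Div b.
  have iT : inT N t := inTt b.
  have [D [[Dn D1] eD]] : CM (Pl l) (y l ^+ N l) (ymon y b).
    by rewrite /ymon; apply: CM_prodr => // i; apply: CM_exprr => //; apply: CMyN.
  have [C' [[C'n C'1] eC']] := Shift l a.
  have e1 : zz l * ymon y b = (D * C / C') *: (ymon y t *
      ymon y (scalevec [ffun j => (a j + (j == l))%N] N)) -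
      C *: (ymon y t * ymon y (scalevec a N) * u l).
    rewrite /zz mulrBl eD hu_central eC eC'; congr (_ - _); last by rewrite -scalerAl.
    rewrite -scalerAr scalerA divfK // -scalerAl scalerA mulrA //.
  rewrite e1 phiB !phiZ (phi_rlin _ _ _ (hu_kG l)) !phi_basis //.
  case: (s == t); last by rewrite mul0r !scaler0 subrr.
  rewrite Ushift; case: (eqVneq (u l) 0) => [->|un].
    by rewrite !mulr0 !scaler0 subrr.
  by rewrite D1 // C'1 // mul1r divr1 subrr.
have Kzx l x s : phi (zz l * x) s = 0.
  have [r ->] := span x; rewrite mulr_sumr phi_sum big1 // => q _.
  by rewrite -scalerAr phiZ mulrA phi_rlin // Kz mul0r scaler0.
have JK x : J x -> forall s, phi x s = 0.
  by move=> [w ->] s; rewrite phi_sum big1 // => l _; apply: Kzx.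
have Sx x : exists r : seq (expvec p * A),
    J (x - \sum_(q <- r) ymon y q.1 * q.2) /\
    (forall q, q \in r -> forall s, phi (ymon y q.1 * q.2) s = if s == q.1 then q.2 else 0).
  have [sp ->] := span x; elim: sp => [|q sp [r [Jr hr]]].
    by exists [::]; rewrite !big_nil subr0; split.
  set b := q.2.1; set g := q.2.2.
  set t := [ffun j => (b j %% N j)%N]; set a := [ffun j => (b j %/ N j)%N].
  have [C eC] := Div b.
  have iT : inT N t := inTt b.
  set c := q.1 * C.
  have sK : forall X U : A, X - (X - U) = U.
    by move=> X U; rewrite opprB addrC subrK.
  have eT : ymon y t * (c *: (ymon u a * gam g)) =
      c *: (ymon y t * ymon y (scalevec a N) * gam g) -
      c *: (ymon y t * (ymon y (scalevec a N) - ymon u a) * gam g).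
    by rewrite -scalerBr -mulrBl -mulrBr sK -scalerAr mulrA.
  exists ((t, c *: (ymon u a * gam g)) :: r); split.
    rewrite !big_cons /=.
    have -> : forall X T U V : A, X + T - (U + V) = (X - U) + (T - V).
      by move=> X T U V; rewrite opprD addrACA.
    apply: JD => //; rewrite eT.
    have -> : q.1 *: (ymon y b * gam g) = c *: (ymon y t * ymon y (scalevec a N) * gam g).
      by rewrite eC -scalerAl scalerA.
    by rewrite sK; apply: JZ; apply: JMr; apply: JMl.
  move=> q'; rewrite inE => /orP [/eqP -> s /=|]; last exact: hr.
  rewrite eT phiB !phiZ phi_rlin // phi_basis //.
  rewrite (JK _ (JMr _ _ (JMl _ _ (Jymon a)))) scaler0 subr0.
  by case: (s == t); rewrite ?mul0r ?scaler0.
split; first by move=> t; exact: phi0.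
split; first by move=> x x' hx hx' t; rewrite phiB hx hx' subrr.
move=> x z hx t.
suff Jx : J x by apply: JK; apply: JMr.
have [r [Jr hr]] := Sx x.
set x' := \sum_(q <- r) ymon y q.1 * q.2.
have px' s : phi x' s = 0.
  have -> : x' = x - (x - x') by rewrite opprB addrC subrK.
  by rewrite phiB hx (JK _ Jr) subrr.
have ps s : \sum_(q <- r | q.1 == s) q.2 = 0.
  rewrite -[RHS](px' s) /x' phi_sum big_mkcond [RHS]big_seq [LHS]big_seq.
  by apply: eq_bigr => q qr; rewrite hr // eq_sym.
have x'0 : x' = 0 by rewrite /x' group_sum big1 // => s _; rewrite ps mulr0.
by move: Jr; rewrite -/x' x'0 subr0.
Qed.
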